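(* Let $D$ be a pv-monoid (idempotent, with symmetric valuation function), $P$ a nonempty finite set of ports, $I,J$ nonempty finite index sets and $m_i$ ($i\in I$), $m'_j$ ($j\in J$) full monomials over $P$. Then \[\Big(\sum_{i\in I}m_i\Big)\otimes\Big(\sum_{j\in J}m'_j\Big)\equiv\begin{cases}\sum_{i\in I}m_i & \text{if } \sum_{i\in I}m_i\equiv\sum_{j\in J}m'_j,\\ 0&\text{otherwise.}\end{cases}\]
   Context: A pv-monoid $(D,\oplus,\mathrm{val},\otimes,0,1)$ consists of a commutative monoid $(D,\oplus,0)$, a map $\mathrm{val}$ from nonempty finite sequences over $D$ to $D$ with $\mathrm{val}(d)=d$ and $\mathrm{val}(d_1,\dots,d_n)=0$ whenever some $d_i=0$, a binary operation $\otimes$ and an element $1$ with $\mathrm{val}(1,\dots,1)=1$, $0\otimes d=d\otimes0=0$, $1\otimes d=d\otimes1=d$. Standing assumption: $D$ is idempotent and $\mathrm{val}$ is symmetric. $I(P)$ is the set of nonempty subsets of $P$, $C(P)$ the set of nonempty subsets of $I(P)$. PIL formulas: $\phi::=true\mid p\mid\overline{\phi}\mid\phi\vee\phi$ ($p\in P$), $\alpha\models_i p$ iff $p\in\alpha$, negation and disjunction as usual, $\wedge$ via De Morgan. A full monomial is a PIL formula $\bigwedge_{p\in P_+}p\wedge\bigwedge_{p\in P_-}\overline p$ with $P_+\cup P_-=P$, $P_+\cap P_-=\emptyset$. PCL formulas: $f::=true\mid\phi\mid\neg f\mid f\sqcup f\mid f+f$; $\gamma\models\phi$ iff every $\alpha\in\gamma$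 satisfies $\phi$; $\neg,\sqcup$ are complement and union; $\gamma\models f_1+f_2$ iff $\gamma=\gamma_1\cup\gamma_2$ with $\gamma_1,\gamma_2\in C(P)$, $\gamma_1\models f_1,\gamma_2\models f_2$. $\sum_{j\in J}m_j$ is the $+$-combination. Weighted formulas are built from constants $d\in D$ and PCL formulas by $\oplus,\otimes$ (and further operators), with semantics $\|\cdot\|:C(P)\to D$: $\|d\|(\gamma)=d$, $\|f\|(\gamma)=1$ if $\gamma\models f$ and $0$ otherwise, $\oplus,\otimes$ pointwise. $\equiv$ means equality of semantics on all of $C(P)$. *)

(* Defs.v *)
From Stdlib Require List Permutation.
From mathcomp Require Import all_boot.
Set Implicit Arguments. Unset Strict Implicit. Unset Printing Implicit Defensive.

(* val is a map on sequences; the axioms only constrain nonempty ones. *)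
Record pvMonoid := PvMonoid {
  pv_car :> Type;
  pv_add : pv_car -> pv_car -> pv_car;
  pv_val : seq pv_car -> pv_car;
  pv_mul : pv_car -> pv_car -> pv_car;
  pv_zero : pv_car;
  pv_one : pv_car;
  pv_addA : forall x y z, pv_add x (pv_add y z) = pv_add (pv_add x y) z;
  pv_addC : forall x y, pv_add x y = pv_add y x;
  pv_add0 : forall x, pv_add pv_zero x = x;
  pv_val1 : forall d, pv_val [:: d] = d;
  pv_val0 : forall s, s <> [::] -> List.In pv_zero s -> pv_val s = pv_zero;
  pv_valone : forall n, pv_val (nseq n.+1 pv_one) = pv_one;
  pv_mul0l : forall d, pv_mul pv_zero d = pv_zero;
  pv_mul0r : forall d, pv_mul d pv_zero = pv_zero;
  pv_mul1l : forall d, pv_mul pv_one d = d;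
  pv_mul1r : forall d, pv_mul d pv_one = d;
  pv_idem : forall d, pv_add d d = d;
  pv_valsym : forall s t, s <> [::] -> Permutation.Permutation s t -> pv_val s = pv_val t
}.

Section Logic.
Variable P : finType.

(* I(P): interactions (nonempty subsets of P); C(P): configurations *)
Definition validI (a : {set P}) : bool := a != set0.
Definition validC (g : {set {set P}}) : bool :=
  (g != set0) && [forall a in g, validI a].

Inductive pil :=
| PTrue
| PVar of P
| PNeg of pil
| POr of pil & pil.

Fixpoint pil_sat (a : {set P}) (phi : pil) : bool :=
  match phi with
  | PTrue => true
  | PVar p => p \in a
  | PNeg f => ~~ pil_sat a f
  | POr f g => pil_sat a f || pil_sat a g
  end.

Definition PAnd (f g : pil) : pil := PNeg (POr (PNeg f) (PNeg g)).

Definition pil_lit (Pp : {set P}) (p : P) : pil :=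
  if p \in Pp then PVar p else PNeg (PVar p).
Definition full_monomial (Pp : {set P}) : pil :=
  foldr PAnd PTrue [seq pil_lit Pp p | p <- enum P].

Inductive pcl :=
| CTrue
| CPil of pil
| CNeg of pcl
| COr of pcl & pcl
| CPlus of pcl & pcl.

Fixpoint pcl_sat (g : {set {set P}}) (f : pcl) : bool :=
  match f with
  | CTrue => true
  | CPil phi => [forall a in g, pil_sat a phi]
  | CNeg f1 => ~~ pcl_sat g f1
  | COr f1 f2 => pcl_sat g f1 || pcl_sat g f2
  | CPlus f1 f2 => [exists g1 : {set {set P}}, exists g2 : {set {set P}},
       [&& validC g1, validC g2, g == g1 :|: g2, pcl_sat g1 f1 & pcl_sat g2 f2]]
  end.

Fixpoint pcl_sum (s : seq pcl) : pcl :=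
  match s with
  | [::] => CTrue (* never used: index sets are nonempty *)
  | [:: x] => x
  | x :: s' => CPlus x (pcl_sum s')
  end.

Variable D : pvMonoid.

Inductive wform :=
| WConst of pv_car D
| WPcl of pcl
| WAdd of wform & wform
| WMul of wform & wform.

Fixpoint wsem (w : wform) (g : {set {set P}}) : pv_car D :=
  match w with
  | WConst d => d
  | WPcl f => if pcl_sat g f then pv_one D else pv_zero D
  | WAdd w1 w2 => pv_add (wsem w1 g) (wsem w2 g)
  | WMul w1 w2 => pv_mul (wsem w1 g) (wsem w2 g)
  end.

Definition wequiv (w1 w2 : wform) : Prop :=
  forall g, validC g -> wsem w1 g = wsem w2 g.

End Logic.

Definition sum_monomials (P I : finType) (m : I -> {set P}) : pcl P :=
  pcl_sum [seq CPil (full_monomial (m i)) | i <- enum I].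

(* Main.v *)
Require Import Defs.
From mathcomp Require Import all_boot.

Lemma pil_full (P : finType) (a Pp : {set P}) :
  pil_sat a (full_monomial Pp) = (a == Pp).
Proof.
have H : forall s, pil_sat a (foldr (@PAnd P) (PTrue P) [seq pil_lit Pp p | p <- s])
   = all (fun p => (p \in a) == (p \in Pp)) s.
  elim=> [|x s IH] //=; rewrite negb_or !negbK IH /pil_lit.
  by case: (x \in Pp) => /=; case: (x \in a).
rewrite /full_monomial H; apply/allP/eqP => [Hx|->].
  by apply/setP => x; apply/eqP; apply: Hx; rewrite mem_enum.
by move=> x _.
Qed.

Lemma sum_unique (P I : finType) (f : I -> {set P}) (s : seq I) (g : {set {set P}}) :
  s != [::] -> validC g ->
  pcl_sat g (pcl_sum [seq CPil (full_monomial (f i)) | i <- s]) ->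
  g = [set z in map f s].
Proof.
elim: s g => [|x s IH] g //= _.
case: s IH => [|y s] IH.
  move=> /andP [/set0Pn [b Hb] _] /= /forallP Hg.
  apply/setP => a; rewrite !inE.
  apply/idP/idP => [Ha|/eqP ->].
    by have := Hg a; rewrite Ha /= pil_full.
  by have := Hg b; rewrite Hb /= pil_full => /eqP <-.
move=> Hv /existsP [g1 /existsP [g2 /and5P [V1 V2 /eqP -> S1 S2]]].
have E2 := IH g2 isT V2 S2.
move: V1 S1 => /andP [/set0Pn [b Hb] _] /forallP Hg.
have E1 : g1 = [set f x].
  apply/setP => a; rewrite !inE.
  apply/idP/idP => [Ha|/eqP ->].
    by have := Hg a; rewrite Ha /= pil_full.
  by have := Hg b; rewrite Hb /= pil_full => /eqP <-.
rewrite E1 E2; apply/setP => a; rewrite !inE.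
by [].
Qed.

Theorem mainTheorem12 (D : pvMonoid) (P : finType) (HP : 0 < #|P|)
  (I J : finType) (HI : 0 < #|I|) (HJ : 0 < #|J|)
  (m : I -> {set P}) (m' : J -> {set P}) :
  let S1 := WPcl D (sum_monomials m) in
  let S2 := WPcl D (sum_monomials m') in
  (wequiv S1 S2 -> wequiv (WMul S1 S2) S1) /\
  (~ wequiv S1 S2 -> wequiv (WMul S1 S2) (WConst P (pv_zero D))).
Proof.
move=> S1 S2; subst S1 S2.
have neI : enum I != [::] by rewrite -size_eq0 -cardE -lt0n.
have neJ : enum J != [::] by rewrite -size_eq0 -cardE -lt0n.
split.
  move=> H g Hg; have /= E := H g Hg; rewrite /= -E.
  by case: (pcl_sat g _); rewrite ?pv_mul1l ?pv_mul0l.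
move=> Hn g Hg /=.
case E1: (pcl_sat g (sum_monomials m)); last by rewrite pv_mul0l.
case E2: (pcl_sat g (sum_monomials m')); last by rewrite pv_mul0r.
exfalso; apply: Hn => h Hh /=.
have U1 := @sum_unique _ _ m _ _ neI Hg E1.
have U2 := @sum_unique _ _ m' _ _ neJ Hg E2.
case F1: (pcl_sat h (sum_monomials m)); case F2: (pcl_sat h (sum_monomials m')) => //.
  have := @sum_unique _ _ m _ _ neI Hh F1; rewrite -U1 => Ehg.
  by rewrite Ehg E2 in F2.
have := @sum_unique _ _ m' _ _ neJ Hh F2; rewrite -U2 => Ehg.
by rewrite Ehg E1 in F1.
Qed.
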